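(* Let $(\mathcal{A},e)$ be an order-unit space and let $L$ be a Lip-norm on $\mathcal{A}$ which is closed. Let $\tilde{\mathcal{A}}=\mathcal{A}/\mathbb{R}e$ with quotient norm $\|\cdot\|^{\sim}$, let $\tilde L$ be the norm on $\tilde{\mathcal{A}}$ induced by $L$ (i.e. $\tilde L(\tilde a)=L(a)$), and let $\mathcal{K}=\{\tilde a\in\tilde{\mathcal{A}}:\tilde L(\tilde a)\le 1\}$. Then $\mathcal{K}$ is a compact convex set for $\|\cdot\|^{\sim}$, and, letting $Af_0(\mathcal{K})$ denote the Banach space of all $\|\cdot\|^{\sim}$-continuous affine real functions on $\mathcal{K}$ taking the value $0$ at $0$, equipped with the supremum norm, the map $\sigma$ defined by $\sigma(\tilde a)(f)=f(\tilde a)$ is an isometric isomorphism of the normed space $(\tilde{\mathcal{A}},\tilde L)$ onto the Banach space dual of $Af_0(\mathcal{K})$.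
   Context: An order-unit space is a real partially ordered vector space $\mathcal{A}$ with a distinguished element $e$ such that (i) for each $a$ there is $r\in\mathbb{R}$ with $a\le re$, and (ii) if $a\le re$ for all $r>0$ then $a\le 0$; it carries the norm $\|a\|=\inf\{r\ge0:-re\le a\le re\}$ and need not be complete. The quotient norm on $\mathcal{A}/\mathbb{R}e$ is $\|\tilde a\|^{\sim}=\inf_{t\in\mathbb{R}}\|a+te\|$. A seminorm $L$ is lower semicontinuous if $\{a: L(a)\le 1\}$ is norm-closed in $\mathcal{A}$. A Lip-norm on $\mathcal{A}$ is a finite-valued seminorm $L$ on $\mathcal{A}$ such that: (1) $L(a)=0$ iff $a\in\mathbb{R}e$; (2) $L$ is lower semicontinuous; (3) the image of $\{a\in\mathcal{A}: L(a)\le1\}$ in $\mathcal{A}/\mathbb{R}e$ is totally bounded for $\|\cdot\|^{\sim}$. $L$ is closed if $\{a\in\mathcal{A}:L(a)\le 1\}$ is complete for the metric from $\|\cdot\|$. *)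

(* Defs.v *)
From HB Require Import structures.
From mathcomp Require Import all_boot all_order all_algebra.
From mathcomp Require Import all_classical all_reals.
Set Implicit Arguments. Unset Strict Implicit. Unset Printing Implicit Defensive.
Import Order.TTheory GRing.Theory Num.Theory.
Local Open Scope ring_scope.
Local Open Scope classical_set_scope.

(* Elements of the quotient A/Re are represented by elements of A. *)

Section OrderUnit.
Context {R : realType} {A : lmodType R}.
Implicit Types (le : A -> A -> Prop) (e : A) (L : A -> R).

Definition ordered_vector_space le :=
  [/\ (forall a, le a a),
      (forall a b, le a b -> le b a -> a = b),
      (forall a b c, le a b -> le b c -> le a c),
      (forall a b c, le a b -> le (a + c) (b + c)) &
      (forall (t : R) a b, 0 <= t -> le a b -> le (t *: a) (t *: b))].

Definition is_order_unit_space le e :=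
  [/\ ordered_vector_space le,
      (forall a, exists r : R, le a (r *: e)) &
      (forall a, (forall r : R, 0 < r -> le a (r *: e)) -> le a 0)].

Definition ou_norm le e (a : A) : R :=
  inf [set r : R | 0 <= r /\ le (- (r *: e)) a /\ le a (r *: e)].

Definition qnorm le e (a : A) : R :=
  inf [set ou_norm le e (a + t *: e) | t in [set: R]].

Definition seminorm L :=
  (forall a b, L (a + b) <= L a + L b) /\ (forall (c : R) a, L (c *: a) = `|c| * L a).

Definition unit_ball L : set A := [set a | L a <= 1].

Definition lower_semicontinuous le e L :=
  forall a, (forall eps : R, 0 < eps -> exists b, L b <= 1 /\ ou_norm le e (a - b) < eps) ->
    L a <= 1.

Definition q_totally_bounded le e (S : set A) :=
  forall eps : R, 0 < eps -> exists s : seq A,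
    forall a, S a -> exists2 b, b \in s & qnorm le e (a - b) < eps.

Definition lip_norm le e L :=
  [/\ seminorm L,
      (forall a, L a = 0 <-> exists t : R, a = t *: e),
      lower_semicontinuous le e L &
      q_totally_bounded le e (unit_ball L)].

Definition closed_seminorm le e L :=
  forall u : nat -> A, (forall n, L (u n) <= 1) ->
    (forall eps : R, 0 < eps -> exists N, forall m n, (N <= m)%N -> (N <= n)%N ->
        ou_norm le e (u m - u n) < eps) ->
    exists2 a, L a <= 1 & (forall eps : R, 0 < eps -> exists N, forall n, (N <= n)%N ->
        ou_norm le e (u n - a) < eps).

Definition q_open le e (U : set A) :=
  forall x, U x -> exists2 eps : R, 0 < eps & forall y, qnorm le e (y - x) < eps -> U y.

Definition q_compact le e (K : set A) :=
  forall C : set (set A), (forall U, C U -> q_open le e U) ->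
    (forall a, K a -> exists2 U, C U & U a) ->
    exists (n : nat) (g : 'I_n -> set A),
      (forall i, C (g i)) /\ (forall a, K a -> exists i, g i a).

Definition q_convex (K : set A) :=
  forall a b (t : R), K a -> K b -> 0 <= t <= 1 -> K (t *: a + (1 - t) *: b).

(* Af_0(K): continuous affine real functions on K (= {L <= 1} / Re) vanishing at 0.
   A function on K is represented by f : A -> R, only its values on K matter. *)
Definition Af0 le e L (f : A -> R) :=
  [/\ f 0 = 0,
      (forall a, L a <= 1 -> forall eps : R, 0 < eps -> exists2 delta : R, 0 < delta &
          forall b, L b <= 1 -> qnorm le e (b - a) < delta -> `|f b - f a| < eps) &
      (forall a b (t : R), L a <= 1 -> L b <= 1 -> 0 <= t <= 1 ->
          f (t *: a + (1 - t) *: b) = t * f a + (1 - t) * f b)].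

Definition supnorm L (f : A -> R) : R := sup [set `|f a| | a in unit_ball L].

(* the unique linear extension to A/Re of an f in Af_0(K), evaluated at a:
   f(a~) := r f(a~ / r) for r = L a + 1 (so that a / r lies in K) *)
Definition ext L (f : A -> R) (a : A) : R := (L a + 1) * f ((L a + 1)^-1 *: a).

Definition sigma L (a : A) : (A -> R) -> R := fun f => ext L f a.

Definition is_dual_elem le e L (phi : (A -> R) -> R) :=
  [/\ (forall f g, Af0 le e L f -> Af0 le e L g -> (forall a, L a <= 1 -> f a = g a) ->
          phi f = phi g),
      (forall f g (c : R), Af0 le e L f -> Af0 le e L g ->
          phi (fun a => c * f a + g a) = c * phi f + phi g) &
      (exists C : R, forall f, Af0 le e L f -> `|phi f| <= C * supnorm L f)].

Definition dual_norm le e L (phi : (A -> R) -> R) : R :=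
  sup [set `|phi f| | f in [set f | Af0 le e L f /\ supnorm L f <= 1]].

End OrderUnit.

(* Main.v *)
Require Import Defs.
From HB Require Import structures.
From mathcomp Require Import all_boot all_order all_algebra.
From mathcomp Require Import all_classical all_reals.
From mathcomp Require Import ring lra.
From Stdlib Require List.
Import Order.TTheory GRing.Theory Num.Theory.
Set Implicit Arguments. Unset Strict Implicit. Unset Printing Implicit Defensive.
Local Open Scope ring_scope.
Local Open Scope classical_set_scope.

Section OU.
Context {R : realType} {A : lmodType R} (le : A -> A -> Prop) (e : A).
Hypothesis Hou : is_order_unit_space le e.

Let Sset (a : A) := [set r : R | 0 <= r /\ le (- (r *: e)) a /\ le a (r *: e)].

Lemma le_refl' a : le a a.
Proof. by case: Hou => -[]. Qed.
Lemma le_trans' a b c : le a b -> le b c -> le a c.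
Proof. by case: Hou => -[_ _ H _ _] _ _; apply: H. Qed.
Lemma le_add' a b c : le a b -> le (a + c) (b + c).
Proof. by case: Hou => -[_ _ _ H _] _ _; apply: H. Qed.
Lemma le_scale' (t : R) a b : 0 <= t -> le a b -> le (t *: a) (t *: b).
Proof. by case: Hou => -[_ _ _ _ H] _ _; apply: H. Qed.
Lemma le_opp' a b : le a b -> le (- b) (- a).
Proof.
move=> /(le_add' (- a - b)).
by rewrite addrA subrr add0r addrCA subrr addr0.
Qed.
Lemma le_add2' a b c d : le a b -> le c d -> le (a + c) (b + d).
Proof.
move=> h1 h2; apply: (le_trans' (le_add' c h1)).
by rewrite ![b + _]addrC; apply: le_add'.
Qed.

Lemma ou_norm_eq0_or : le 0 e \/ forall a, ou_norm le e a = 0.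
Proof.
have [h|h] := pselect (le 0 e); first by left.
right => a.
have sub : Sset a `<=` [set 0].
  move=> r [r0 [h1 h2]]; rewrite /= ; apply/eqP; rewrite eq_le r0 andbT.
  rewrite leNgt; apply/negP => rpos; apply: h.
  have h3 := le_trans' h1 h2.
  have := le_add' (r *: e) h3; rewrite addNr => h4.
  have r2 : 0 < r + r by rewrite addr_gt0.
  have r2' : 0 <= (r + r)^-1 by rewrite invr_ge0 ltW.
  have := le_scale' r2' h4.
  by rewrite scaler0 -scalerDl scalerA mulVf ?scale1r // gt_eqF.
rewrite /ou_norm -/(Sset a).
have [ne|em] := pselect (Sset a !=set0).
  have -> : Sset a = [set 0].
    apply/seteqP; split => // x /= ->; case: ne => y Sy.
    by have := sub _ Sy => /= <-.
  by rewrite inf1.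
have -> : Sset a = set0.
  by apply/seteqP; split => // x Sx; apply: em; exists x.
by rewrite inf0.
Qed.


Section Pos.
Hypothesis He : le 0 e.

Lemma mono_e (r s : R) : r <= s -> le (r *: e) (s *: e).
Proof.
move=> rs; have := le_scale' (t := s - r) _ He.
rewrite subr_ge0 rs scaler0 => /(_ isT) /(le_add' (r *: e)).
by rewrite add0r -scalerDl subrK.
Qed.

Lemma S_up a r s : Sset a r -> r <= s -> Sset a s.
Proof.
move=> [r0 [h1 h2]] rs; split; first exact: le_trans r0 rs.
split; last exact: le_trans' h2 (mono_e rs).
apply: le_trans' h1; apply: le_opp'; exact: mono_e.
Qed.

Lemma S_ne a : Sset a !=set0.
Proof.
case: Hou => _ Hi _.
have [r1 h1] := Hi a; have [r2 h2] := Hi (- a).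
pose r := Num.max 0 (Num.max r1 r2).
have r0 : 0 <= r by rewrite le_max lexx.
exists r; split => //; split.
  have := le_opp' h2; rewrite opprK => h; apply: le_trans' h.
  by apply: le_opp'; apply: mono_e; rewrite !le_max lexx !orbT.
apply: (le_trans' h1); apply: mono_e; by rewrite /r !le_max lexx !orbT.
Qed.

Lemma S_lb a : lbound (Sset a) 0.
Proof. by move=> r []. Qed.

Lemma S_hasinf a : has_inf (Sset a).
Proof. by split; [exact: S_ne | exists 0; exact: S_lb]. Qed.

Lemma inf_S_le a r : Sset a r -> ou_norm le e a <= r.
Proof. by move=> Sr; apply: ge_inf => //; exists 0; exact: S_lb. Qed.

Lemma S_adh a eps : 0 < eps -> exists2 r, Sset a r & r < ou_norm le e a + eps.
Proof. by move=> eps0; apply: inf_adherent => //; exact: S_hasinf. Qed.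

Lemma S_add a b r s : Sset a r -> Sset b s -> Sset (a + b) (r + s).
Proof.
move=> [r0 [h1 h2]] [s0 [h3 h4]]; split; first exact: addr_ge0.
split; last by rewrite scalerDl; apply: le_add2'.
by rewrite scalerDl opprD; apply: le_add2'.
Qed.

Lemma S_scale a r c : Sset a r -> Sset (c *: a) (`|c| * r).
Proof.
move=> [r0 [h1 h2]]; split; first by rewrite mulr_ge0.
have [c0|c0] := leP 0 c.
  rewrite ger0_norm // -scalerA -scalerN; split; exact: le_scale'.
rewrite ltr0_norm // -scalerA.
have h1' := le_opp' h1; have h2' := le_opp' h2; rewrite opprK in h1'.
have nc : 0 <= - c by rewrite oppr_ge0 ltW.
have -> : c *: a = (- c) *: (- a) by rewrite scalerN scaleNr opprK.
split; last exact: le_scale'.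
by rewrite -scalerN; apply: le_scale'.
Qed.


End Pos.

Notation on := (ou_norm le e).

Lemma ou_norm_ge0 a : 0 <= on a.
Proof.
have [He|H0] := ou_norm_eq0_or; last by rewrite H0.
by apply: lb_le_inf; [exact: S_ne|exact: S_lb].
Qed.

Lemma ou_normD a b : on (a + b) <= on a + on b.
Proof.
have [He|H0] := ou_norm_eq0_or; last by rewrite !H0 addr0.
apply/ler_addgt0Pr => eps eps0.
have eps2 : 0 < eps / 2 by rewrite divr_gt0.
have [r Sr hr] := S_adh He a eps2.
have [s Ss hs] := S_adh He b eps2.
apply: le_trans (inf_S_le (S_add Sr Ss)) _.
rewrite [eps]splitr addrACA; apply: ltW; exact: ltrD.
Qed.

Lemma ou_normZ c a : on (c *: a) <= `|c| * on a.
Proof.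
have [He|H0] := ou_norm_eq0_or; last by rewrite !H0 mulr0.
apply/ler_addgt0Pr => eps eps0.
have c1 : 0 < `|c| + 1 by rewrite ltr_wpDl.
have eps2 : 0 < eps / (`|c| + 1) by rewrite divr_gt0.
have [r Sr hr] := S_adh He a eps2.
apply: le_trans (inf_S_le (S_scale c Sr)) _.
apply: le_trans (_ : `|c| * (on a + eps / (`|c| + 1)) <= _).
  by apply: ler_wpM2l => //; apply: ltW.
rewrite mulrDr lerD2l mulrA ler_pdivrMr // [X in X <= _]mulrC mulrDr mulr1 lerDl ltW //.
Qed.

Lemma ou_norm0 : on 0 = 0.
Proof.
apply/eqP; rewrite eq_le ou_norm_ge0 andbT.
by have := ou_normZ 0 0; rewrite scale0r normr0 mul0r.
Qed.

Lemma ou_normN a : on (- a) = on a.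
Proof.
apply/eqP; rewrite eq_le.
have := ou_normZ (-1) a; rewrite scaleN1r normrN normr1 mul1r => ->.
have := ou_normZ (-1) (- a); rewrite scaleN1r opprK normrN normr1 mul1r => ->.
by [].
Qed.

Notation qn := (qnorm le e).

Lemma Q_lb a : lbound [set on (a + t *: e) | t in [set: R]] 0.
Proof. by move=> _ [t _ <-]; exact: ou_norm_ge0. Qed.

Lemma Q_ne a : [set on (a + t *: e) | t in [set: R]] !=set0.
Proof. by exists (on (a + 0 *: e)); exists 0. Qed.

Lemma qnorm_ge0 a : 0 <= qn a.
Proof. by apply: lb_le_inf; [exact: Q_ne|exact: Q_lb]. Qed.

Lemma qnorm_le a t : qn a <= on (a + t *: e).
Proof. by apply: ge_inf; [exists 0; exact: Q_lb| exists t]. Qed.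

Lemma qnorm_le_on a : qn a <= on a.
Proof. by have := qnorm_le a 0; rewrite scale0r addr0. Qed.

Lemma qnorm_adh a eps : 0 < eps -> exists t, on (a + t *: e) < qn a + eps.
Proof.
move=> eps0.
have [] := @inf_adherent _ [set on (a + t *: e) | t in [set: R]] eps eps0.
  by split; [exact: Q_ne| exists 0; exact: Q_lb].
by move=> _ [t _ <-] h; exists t.
Qed.

Lemma qnormD a b : qn (a + b) <= qn a + qn b.
Proof.
apply/ler_addgt0Pr => eps eps0.
have eps2 : 0 < eps / 2 by rewrite divr_gt0.
have [t ht] := qnorm_adh a eps2; have [s hs] := qnorm_adh b eps2.
apply: le_trans (qnorm_le (a + b) (t + s)) _.
have -> : a + b + (t + s) *: e = (a + t *: e) + (b + s *: e).
  by rewrite scalerDl addrACA.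
apply: le_trans (ou_normD _ _) _.
rewrite [eps]splitr addrACA; apply: ltW; exact: ltrD.
Qed.

Lemma qnormZ c a : qn (c *: a) <= `|c| * qn a.
Proof.
apply/ler_addgt0Pr => eps eps0.
have c1 : 0 < `|c| + 1 by rewrite ltr_wpDl.
have eps2 : 0 < eps / (`|c| + 1) by rewrite divr_gt0.
have [t ht] := qnorm_adh a eps2.
apply: le_trans (qnorm_le _ (c * t)) _.
rewrite -scalerA -scalerDr.
apply: le_trans (ou_normZ _ _) _.
apply: le_trans (_ : `|c| * (qn a + eps / (`|c| + 1)) <= _).
  by apply: ler_wpM2l => //; apply: ltW.
rewrite mulrDr lerD2l mulrA ler_pdivrMr // [X in X <= _]mulrC mulrDr mulr1 lerDl ltW //.
Qed.

Lemma qnormN a : qn (- a) = qn a.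
Proof.
apply/eqP; rewrite eq_le.
have := qnormZ (-1) a; rewrite scaleN1r normrN normr1 mul1r => ->.
have := qnormZ (-1) (- a); rewrite scaleN1r opprK normrN normr1 mul1r => ->.
by [].
Qed.

Lemma qnorm_e t : qn (t *: e) = 0.
Proof.
apply/eqP; rewrite eq_le qnorm_ge0 andbT.
by have := qnorm_le (t *: e) (- t); rewrite scaleNr subrr ou_norm0.
Qed.

Lemma qnorm_shift a t : qn (a + t *: e) = qn a.
Proof.
apply/eqP; rewrite eq_le; apply/andP; split.
  by have := qnormD a (t *: e); rewrite qnorm_e addr0.
have := qnormD (a + t *: e) ((- t) *: e); rewrite qnorm_e addr0.
by rewrite -addrA -scalerDl subrr scale0r addr0.
Qed.

Lemma qnormB a b : qn (a - b) = qn (b - a).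
Proof. by rewrite -qnormN opprB. Qed.

Lemma qnorm_tri a b c : qn (a - c) <= qn (a - b) + qn (b - c).
Proof. by have := qnormD (a - b) (b - c); rewrite addrA subrK. Qed.

End OU.

Section HB.
Context {R : realType} {V : lmodType R} (p : V -> R).
Hypothesis p_add : forall x y, p (x + y) <= p x + p y.
Hypothesis p_scale : forall (c : R) x, p (c *: x) <= `|c| * p x.
Variable a0 : V.

Lemma p0 : p 0 = 0.
Proof.
apply/eqP; rewrite eq_le; apply/andP; split.
  by have := p_scale 0 0; rewrite scale0r normr0 mul0r.
by have := p_add 0 0; rewrite addr0; lra.
Qed.

Lemma p_ge0 x : 0 <= p x.
Proof.
have := p_add x (- x); rewrite subrr p0.
have := p_scale (-1) x; rewrite scaleN1r normrN normr1 mul1r; lra.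
Qed.

Lemma p_scale_ge c x : `|c| * p x <= p (c *: x).
Proof.
have [->|c0] := eqVneq c 0; first by rewrite normr0 mul0r scale0r p0.
have := p_scale c^-1 (c *: x); rewrite scalerA mulVf // scale1r normrV ?unitfE //.
have nc : 0 < `|c| by rewrite normr_gt0.
by rewrite ler_pdivlMl.
Qed.

Definition Good (G : set (V * R)) := [/\ (forall x u v, G (x, u) -> G (x, v) -> u = v),
  G (a0, p a0),
  (forall (c : R) x u y v, G (x, u) -> G (y, v) -> G (c *: x + y, c * u + v)) &
  (forall x u, G (x, u) -> u <= p x)].

Lemma Good0 G : Good G -> G (0, 0).
Proof.
case=> _ Ga Gc _; have := Gc (-1) _ _ _ _ Ga Ga.
by rewrite scaleN1r addNr mulN1r addNr.
Qed.

Lemma GoodZ G (s : R) x u : Good G -> G (x, u) -> G (s *: x, s * u).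
Proof.
move=> GG Gxu; case: (GG) => _ _ Gc _.
by have := Gc s _ _ _ _ Gxu (Good0 GG); rewrite addr0 addr0.
Qed.

Let P G := G = set0 \/ Good G.

Lemma P_chain (F : set (set (V * R))) : F `<=` P -> total_on F subset ->
  P (\bigcup_(X in F) X).
Proof.
move=> FP Ftot.
have mem_good X z : F X -> X z -> Good X.
  move=> FX Xz; case: (FP X FX) => // X0; by rewrite X0 in Xz.
have [[X0 [FX0 [z0 Xz0]]]|none] := pselect (exists X, F X /\ X !=set0); last first.
  left; apply/seteqP; split => // z [X FX Xz]; apply: none; exists X; split => //; by exists z.
have G0 := mem_good _ _ FX0 Xz0.
right; split.
- move=> x u v [X1 F1 X1u] [X2 F2 X2v].
  have g1 := mem_good _ _ F1 X1u; have g2 := mem_good _ _ F2 X2v.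
  case: (Ftot _ _ F1 F2) => [s12|s21].
    by case: g2 => H _ _ _; apply: H (s12 _ X1u) X2v.
  by case: g1 => H _ _ _; apply: H X1u (s21 _ X2v).
- by exists X0 => //; case: G0.
- move=> c x u y v [X1 F1 X1u] [X2 F2 X2v].
  have g1 := mem_good _ _ F1 X1u; have g2 := mem_good _ _ F2 X2v.
  case: (Ftot _ _ F1 F2) => [s12|s21].
    by exists X2 => //; case: g2 => _ _ H _; apply: H (s12 _ X1u) X2v.
  by exists X1 => //; case: g1 => _ _ H _; apply: H X1u (s21 _ X2v).
- move=> x u [X1 F1 X1u]; have g1 := mem_good _ _ F1 X1u.
  by case: g1 => _ _ _ H; apply: H.
Qed.

Lemma Good_line : Good [set z | exists t : R, z = (t *: a0, t * p a0)].
Proof.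
split.
- move=> x u v [t [-> ->]] [t' [E ->]].
  have [->|na] := eqVneq a0 0.
    by rewrite p0 !mulr0.
  have : (t - t') *: a0 = 0 by rewrite scalerBl E subrr.
  move/eqP; rewrite scaler_eq0 (negbTE na) orbF subr_eq0 => /eqP -> //.
- by exists 1; rewrite scale1r mul1r.
- move=> c x u y v [t [-> ->]] [t' [-> ->]]; exists (c * t + t').
  by rewrite scalerDl scalerA mulrDl mulrA.
- move=> x u [t [-> ->]]; apply: le_trans (p_scale_ge _ _).
  by rewrite ler_wpM2r ?p_ge0 // ler_norm.
Qed.

Lemma extend M x0 : Good M -> ~ (exists u, M (x0, u)) ->
  exists M', Good M' /\ M `<` M'.
Proof.
move=> GM nx; case: (GM) => Mfun Ma0 Mc Mdom.
pose S := [set z.2 - p (z.1 - x0) | z in M].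
have Sub : forall y v, M (y, v) -> ubound S (p (y + x0) - v).
  move=> y v Myv _ [[x u] Mxu <-] /=.
  have := Mdom _ _ (Mc 1 _ _ _ _ Mxu Myv); rewrite scale1r mul1r => h.
  have := p_add (x - x0) (y + x0); rewrite addrCA subrK [y + x]addrC => h2.
  lra.
have Sne : S !=set0 by exists (p a0 - p (a0 - x0)), (a0, p a0).
have Shas : has_sup S by split => //; exists (p (a0 + x0) - p a0); apply: Sub.
set c := sup S.
have c_ge : forall x u, M (x, u) -> u - p (x - x0) <= c.
  by move=> x u Mxu; apply: sup_upper_bound => //; exists (x, u).
have c_le : forall y v, M (y, v) -> c <= p (y + x0) - v.
  by move=> y v Myv; apply: ge_sup => //; apply: Sub.
pose M' := [set z | exists x u t, M (x, u) /\ z = (x + t *: x0, u + t * c)].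
exists M'; split; last first.
  split.
    by move=> [x u] Mxu; exists x, u, 0; rewrite scale0r mul0r !addr0.
  move=> /(_ (x0, c)) H; apply: nx; exists c; apply: H.
  by exists 0, 0, 1; rewrite add0r scale1r mul1r add0r; split => //; exact: Good0.
split.
- move=> x w w' [x1 [u1 [t1 [M1 [E1 ->]]]]] [x2 [u2 [t2 [M2 [E2 ->]]]]].
  have [et|net] := eqVneq t1 t2.
    rewrite -et in E2; move: E2; rewrite E1 => /addIr ex; rewrite -ex in M2.
    by rewrite (Mfun _ _ _ M1 M2) et.
  exfalso; apply: nx.
  have d0 : t1 - t2 != 0 by rewrite subr_eq0.
  exists ((t1 - t2)^-1 * (- u1 + u2)).
  have : M ((t1 - t2)^-1 *: ((-1) *: x1 + x2), (t1 - t2)^-1 * ((-1) * u1 + u2)).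
    by apply: GoodZ => //; apply: Mc.
  rewrite mulN1r scaleN1r.
  suff -> : (t1 - t2)^-1 *: (- x1 + x2) = x0 by [].
  have : x1 + t1 *: x0 = x2 + t2 *: x0 by rewrite -E1 -E2.
  move=> E; apply: (scalerI d0); rewrite scalerA mulfV // scale1r scalerBl.
  by rewrite -[x2](addrK (t2 *: x0)) -E addrA addKr.
- by exists a0, (p a0), 0; rewrite scale0r mul0r !addr0.
- move=> k x w y v [x1 [u1 [t1 [M1 [-> ->]]]]] [x2 [u2 [t2 [M2 [-> ->]]]]].
  exists (k *: x1 + x2), (k * u1 + u2), (k * t1 + t2); split; first exact: Mc.
  congr (_, _).
    by rewrite scalerDr scalerA scalerDl addrACA.
  by rewrite mulrDr mulrA mulrDl addrACA.
- move=> x w [x1 [u1 [t [M1 [-> ->]]]]].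
  have [t0|t0] := ltP 0 t.
    have := c_le _ _ (GoodZ t^-1 GM M1).
    have h := p_scale t^-1 (x1 + t *: x0).
    rewrite scalerDr scalerA mulVf ?gt_eqF // scale1r gtr0_norm ?invr_gt0 // in h.
    move=> h2.
    have h3 : t * c <= t * (p (t^-1 *: x1 + x0) - t^-1 * u1) by rewrite ler_pM2l.
    have h4 : t * p (t^-1 *: x1 + x0) <= p (x1 + t *: x0).
      by rewrite -ler_pdivlMl // mulrC.
    move: h3; rewrite mulrBr mulrA mulfV ?gt_eqF // mul1r => h3.
    lra.
  have [->|tneg] := eqVneq t 0.
    by rewrite scale0r mul0r !addr0; apply: Mdom.
  have s0 : 0 < - t by rewrite oppr_gt0 lt_neqAle tneg.
  have := c_ge _ _ (GoodZ (- t)^-1 GM M1).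
  have h := p_scale (- t)^-1 (x1 + t *: x0).
  have E : (- t)^-1 *: (x1 + t *: x0) = (- t)^-1 *: x1 - x0.
    by rewrite scalerDr scalerA invrN mulNr (mulVf tneg) scaleN1r.
  rewrite E gtr0_norm ?invr_gt0 // in h.
  move=> h2.
  have h3 : (- t) * ((- t)^-1 * u1 - p ((- t)^-1 *: x1 - x0)) <= (- t) * c.
    by rewrite ler_pM2l.
  have h4 : (- t) * p ((- t)^-1 *: x1 - x0) <= p (x1 + t *: x0).
    by rewrite -ler_pdivlMl // mulrC.
  move: h3; rewrite mulrBr mulrA mulfV ?gt_eqF // mul1r => h3.
  lra.
Qed.

Lemma hahn_banach : exists f : V -> R,
  [/\ (forall (c : R) x y, f (c *: x + y) = c * f x + f y),
      (forall x, f x <= p x) & f a0 = p a0].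
Proof.
have [M [PM Mmax]] := Zorn_bigcup P_chain.
have GM : Good M.
  case: PM => // M0; exfalso; apply: (Mmax _ _ (or_intror Good_line)).
  rewrite M0; split => // /(_ (a0, p a0)) H.
  have : (set0 : set (V * R)) (a0, p a0) by apply: H; exists 1; rewrite scale1r mul1r.
  by [].
have tot : forall x, exists u, M (x, u).
  move=> x0; apply: contrapT => nx.
  have [M' [G' MM']] := extend GM nx.
  exact: Mmax _ MM' (or_intror G').
pose f x := xget 0 [set u | M (x, u)].
have Mf x : M (x, f x) by have [u Mu] := tot x; apply: (@xgetPex _ 0 [set u | M (x, u)]); exists u.
case: (GM) => Mfun Ma0 Mc Mdom.
exists f; split.
- by move=> c x y; apply: (Mfun (c *: x + y)); [exact: Mf | exact: Mc].
- by move=> x; apply: Mdom.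
- by apply: Mfun (Mf _) Ma0.
Qed.

End HB.

Section Lip.
Context {R : realType} {A : lmodType R} (le : A -> A -> Prop) (e : A) (L : A -> R).
Hypothesis Hou : is_order_unit_space le e.
Hypothesis Hlip : lip_norm le e L.
Notation on := (ou_norm le e).
Notation qn := (qnorm le e).

Lemma L_add a b : L (a + b) <= L a + L b.
Proof. by case: Hlip => -[H _] _ _ _; apply: H. Qed.
Lemma L_Z c a : L (c *: a) = `|c| * L a.
Proof. by case: Hlip => -[_ H] _ _ _; apply: H. Qed.
Lemma L0 : L 0 = 0.
Proof. by rewrite -(scale0r 0) L_Z normr0 mul0r. Qed.
Lemma L_N a : L (- a) = L a.
Proof. by rewrite -scaleN1r L_Z normrN normr1 mul1r. Qed.
Lemma L_ge0 a : 0 <= L a.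
Proof.
have := L_add a (- a); rewrite subrr L0 L_N; lra.
Qed.
Lemma L_e t : L (t *: e) = 0.
Proof. by case: Hlip => _ H _ _; apply/H; exists t. Qed.
Lemma L_shift a t : L (a + t *: e) = L a.
Proof.
apply/eqP; rewrite eq_le; apply/andP; split.
  by have := L_add a (t *: e); rewrite L_e addr0.
have := L_add (a + t *: e) ((- t) *: e); rewrite L_e addr0.
by rewrite -addrA -scalerDl subrr scale0r addr0.
Qed.

Lemma lsc_q a : (forall eps : R, 0 < eps -> exists b, L b <= 1 /\ qn (a - b) < eps) ->
  L a <= 1.
Proof.
move=> H; case: Hlip => _ _ Hlsc _; apply: Hlsc => eps eps0.
have eps2 : 0 < eps / 2 by rewrite divr_gt0.
have [b [Lb hb]] := H _ eps2.
have [t ht] := qnorm_adh Hou (a - b) eps2.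
exists (b - t *: e); split; first by rewrite -scaleNr L_shift.
have -> : a - (b - t *: e) = a - b + t *: e by rewrite opprD opprK addrA.
apply: (lt_trans ht); rewrite [X in _ < X]splitr ltrD2r //.
Qed.

Section F.
Variable f : A -> R.
Hypothesis Hf : Af0 le e L f.

Lemma f0 : f 0 = 0. Proof. by case: Hf. Qed.
Lemma f_aff a b (t : R) : L a <= 1 -> L b <= 1 -> 0 <= t <= 1 ->
  f (t *: a + (1 - t) *: b) = t * f a + (1 - t) * f b.
Proof. by case: Hf => _ _ H; apply: H. Qed.
Lemma f_cont a : L a <= 1 -> forall eps : R, 0 < eps -> exists2 delta : R, 0 < delta &
  forall b, L b <= 1 -> qn (b - a) < delta -> `|f b - f a| < eps.
Proof. by case: Hf => _ H _; apply: H. Qed.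

Lemma f_hom x s : L x <= 1 -> 0 <= s <= 1 -> f (s *: x) = s * f x.
Proof.
move=> Kx s01; have := f_aff Kx (_ : L 0 <= 1) s01.
by rewrite scaler0 addr0 f0 mulr0 addr0; apply; rewrite L0.
Qed.

Lemma f_odd x : L x <= 1 -> f (- x) = - f x.
Proof.
move=> Kx.
have h : 0 <= (2^-1 : R) <= 1 by apply/andP; split; lra.
have := f_aff Kx (_ : L (- x) <= 1) h; rewrite L_N => /(_ Kx).
have -> : 1 - 2^-1 = 2^-1 :> R by rewrite {1}[1](splitr 1) mul1r addrK.
rewrite scalerN subrr f0 -mulrDr => /esym /eqP.
rewrite mulf_eq0 invr_eq0 pnatr_eq0 /= addr_eq0 => /eqP ->.
by rewrite opprK.
Qed.

Lemma f_shift x t : L x <= 1 -> f (x + t *: e) = f x.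
Proof.
move=> Kx; apply/eqP; rewrite -subr_eq0 -normr_le0.
apply/ler_addgt0Pr => eps eps0; rewrite add0r.
have [d d0 Hd] := f_cont Kx eps0.
apply/ltW/Hd; first by rewrite L_shift.
by rewrite addrC addKr qnorm_e.
Qed.

Lemma Kscale a r : 0 < r -> L a <= r -> L (r^-1 *: a) <= 1.
Proof.
move=> r0 Lr; rewrite L_Z ger0_norm; last by rewrite invr_ge0 ltW.
by rewrite mulrC ler_pdivrMr // mul1r.
Qed.

Lemma ext_two a r r' : 0 < r -> r <= r' -> L a <= r ->
  r * f (r^-1 *: a) = r' * f (r'^-1 *: a).
Proof.
move=> r0 rr' Lr; have r'0 : 0 < r' by apply: lt_le_trans rr'.
have -> : r'^-1 *: a = (r / r') *: (r^-1 *: a).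
  by rewrite scalerA mulrAC divff ?gt_eqF // mul1r.
rewrite (@f_hom (r^-1 *: a) (r / r')); last 2 first.
- exact: Kscale.
- by apply/andP; split; [rewrite divr_ge0 // ltW | rewrite ler_pdivrMr // mul1r].
by rewrite mulrA mulrCA divff ?gt_eqF // mulr1.
Qed.

Lemma ext_any a r : 0 < r -> L a <= r -> ext L f a = r * f (r^-1 *: a).
Proof.
move=> r0 Lr; rewrite /ext.
have r1 : 0 < L a + 1 by rewrite ltr_wpDl // L_ge0.
have [h|h] := leP r (L a + 1).
  by apply/esym/ext_two.
by apply: ext_two => //; [exact: ltW | rewrite lerDl].
Qed.

Lemma ext_K x : L x <= 1 -> ext L f x = f x.
Proof. by move=> Kx; rewrite (@ext_any x 1) // invr1 scale1r mul1r. Qed.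

Lemma extD a b : ext L f (a + b) = ext L f a + ext L f b.
Proof.
have ra0 : 0 < L a + 1 by rewrite ltr_wpDl // L_ge0.
have rb0 : 0 < L b + 1 by rewrite ltr_wpDl // L_ge0.
set ra := L a + 1 in ra0 *; set rb := L b + 1 in rb0 *.
have r0 : 0 < ra + rb by rewrite addr_gt0.
rewrite (@ext_any (a + b) (ra + rb)) //; last first.
  by apply: le_trans (L_add a b) _; rewrite /ra /rb; lra.
rewrite (@ext_any a ra) ?lerDl // (@ext_any b rb) ?lerDl //.
have ra0' : ra != 0 by rewrite gt_eqF.
have rb0' : rb != 0 by rewrite gt_eqF.
have r0' : ra + rb != 0 by rewrite gt_eqF.
have e0 : 1 - ra / (ra + rb) = rb / (ra + rb) by field.
have e1 : ra / (ra + rb) * ra^-1 = (ra + rb)^-1 by rewrite mulrAC divff // mul1r.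
have e2 : rb / (ra + rb) * rb^-1 = (ra + rb)^-1 by rewrite mulrAC divff // mul1r.
have -> : (ra + rb)^-1 *: (a + b) =
  (ra / (ra + rb)) *: (ra^-1 *: a) + (1 - ra / (ra + rb)) *: (rb^-1 *: b).
  by rewrite e0 !scalerA e1 e2 scalerDr.
rewrite f_aff; last 3 first.
- by apply: Kscale => //; rewrite lerDl.
- by apply: Kscale => //; rewrite lerDl.
- apply/andP; split; first by rewrite divr_ge0 // ltW.
  by rewrite ler_pdivrMr // mul1r lerDl ltW.
by rewrite e0; field.
Qed.

Lemma extN a : ext L f (- a) = - ext L f a.
Proof.
have r0 : 0 < L a + 1 by rewrite ltr_wpDl // L_ge0.
rewrite (@ext_any (- a) (L a + 1)) ?L_N ?lerDl // (@ext_any a (L a + 1)) ?lerDl //.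
by rewrite scalerN f_odd ?mulrN // Kscale // lerDl.
Qed.

Lemma extZ c a : ext L f (c *: a) = c * ext L f a.
Proof.
have r0 : 0 < L a + 1 by rewrite ltr_wpDl // L_ge0.
have [c0|c0] := ltP 0 c.
  rewrite (@ext_any (c *: a) (c * (L a + 1))) ?mulr_gt0 //; last first.
    by rewrite L_Z gtr0_norm // ler_pM2l // lerDl.
  rewrite (@ext_any a (L a + 1)) ?lerDl // scalerA.
  have h : (c * (L a + 1))^-1 * c = (L a + 1)^-1.
    by field; apply/andP; split; rewrite gt_eqF.
  by rewrite h mulrA.
have [->|cneg] := eqVneq c 0.
  by rewrite scale0r mul0r ext_K ?f0 // L0.
have cn : 0 < - c by rewrite oppr_gt0 lt_neqAle cneg.
have -> : c *: a = - ((- c) *: a) by rewrite scaleNr opprK.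
rewrite extN.
rewrite (@ext_any ((- c) *: a) ((- c) * (L a + 1))) ?mulr_gt0 //; last first.
  by rewrite L_Z gtr0_norm // ler_pM2l // lerDl.
rewrite (@ext_any a (L a + 1)) ?lerDl // scalerA.
have h : (- c * (L a + 1))^-1 * - c = (L a + 1)^-1.
  by field; rewrite (gt_eqF r0) cneg.
by rewrite h mulrA mulNr mulNr opprK.
Qed.

Lemma ext_shift a t : ext L f (a + t *: e) = ext L f a.
Proof.
have r0 : 0 < L a + 1 by rewrite ltr_wpDl // L_ge0.
rewrite (@ext_any (a + t *: e) (L a + 1)) ?L_shift ?lerDl //.
rewrite (@ext_any a (L a + 1)) ?lerDl // scalerDr scalerA f_shift //.
by rewrite Kscale // lerDl.
Qed.

Lemma ext_bound a r B : 0 < r -> L a <= r -> (forall x, L x <= 1 -> `|f x| <= B) ->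
  `|ext L f a| <= r * B.
Proof.
move=> r0 Lr HB; rewrite (ext_any r0 Lr) normrM gtr0_norm //.
by rewrite ler_pM2l // HB // Kscale.
Qed.

End F.
End Lip.

Section Compact.
Context {R : realType} {A : lmodType R} (le : A -> A -> Prop) (e : A) (L : A -> R).
Hypothesis Hou : is_order_unit_space le e.
Hypothesis Hlip : lip_norm le e L.
Hypothesis Hcl : closed_seminorm le e L.
Notation on := (ou_norm le e).
Notation qn := (qnorm le e).
Let K := unit_ball L.
Let ball (b : A) (r : R) := [set y | qn (y - b) < r].

Lemma ball_open b r : q_open le e (ball b r).
Proof.
move=> y yb; exists (r - qn (y - b)); first by rewrite subr_gt0.
move=> z hz; rewrite /ball /=.
apply: le_lt_trans (qnorm_tri Hou z y b) _.
by rewrite -ltrBrDr.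
Qed.

Lemma rad_small n : ((2 : R) ^+ n)^-1 <= (n.+1%:R)^-1.
Proof.
rewrite lef_pV2 ?posrE ?exprn_gt0 ?ltr0n //.
by rewrite -natrX ler_nat ltn_expl.
Qed.

Lemma exists_small (eps : R) : 0 < eps -> exists k : nat, forall n, (k <= n)%N -> ((2 : R) ^+ n)^-1 < eps.
Proof.
move=> eps0; have [k hk] := ltr_add_invr eps0; rewrite add0r in hk.
exists k => n kn; apply: le_lt_trans (rad_small n) _; apply: le_lt_trans hk.
by rewrite lef_pV2 ?posrE ?ltr0n // ler_nat.
Qed.

Section Cov.
Variable C : set (set A).
Hypothesis HCo : forall U, C U -> q_open le e U.
Hypothesis HCc : forall a, L a <= 1 -> exists2 U, C U & U a.

Definition covered (S : set A) := exists l : list (set A),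
  (forall U, List.In U l -> C U) /\ (forall a, S a -> exists U, List.In U l /\ U a).

Lemma covered0 S : (forall a, ~ S a) -> covered S.
Proof. by move=> h; exists nil; split => // a /h. Qed.

Lemma coveredU S T : covered S -> covered T -> covered (S `|` T).
Proof.
move=> [l1 [h1 h1']] [l2 [h2 h2']]; exists (l1 ++ l2); split.
  by move=> U iU; case: (List.in_app_or _ _ _ iU) => [/h1|/h2].
move=> a [/h1'|/h2'] [U [iU Ua]]; exists U; split => //; apply: List.in_or_app; by [left|right].
Qed.

Lemma covered_sub S T : S `<=` T -> covered T -> covered S.
Proof. by move=> ST [l [h1 h2]]; exists l; split => // a /ST /h2. Qed.

Lemma covered_net S r (s : seq A) : (forall b, b \in s -> covered (S `&` ball b r)) ->
  covered (S `&` [set a | exists2 b, b \in s & qn (a - b) < r]).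
Proof.
elim: s => [|b s IH] H.
  by apply: covered0 => a [_ [b]]; rewrite in_nil.
apply: (@covered_sub _ ((S `&` ball b r) `|` (S `&` [set a | exists2 b, b \in s & qn (a - b) < r]))).
  move=> a [Sa [b']]; rewrite in_cons => /orP [/eqP -> h|h1 h2]; first by left.
  by right; split => //; exists b'.
apply: coveredU; first by apply: H; rewrite mem_head.
by apply: IH => b' b's; apply: H; rewrite in_cons b's orbT.
Qed.

Lemma bad_split S r : 0 < r -> S `<=` K -> ~ covered S -> exists b, ~ covered (S `&` ball b r).
Proof.
move=> r0 SK nS; case: Hlip => _ _ _ /(_ r r0) [s Hs].
apply/not_existsP => /= H; apply: nS.
apply: (@covered_sub _ (S `&` [set a | exists2 b, b \in s & qn (a - b) < r])).
  by move=> a Sa; split => //; apply: Hs; apply: SK.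
apply: covered_net => b _; have := H b; exact: contrapT.
Qed.

Hypothesis Hbad : ~ covered K.

Let rad (n : nat) : R := ((2 : R) ^+ n)^-1.
Let next (S : set A) (n : nat) : A := xget 0 [set b | ~ covered (S `&` ball b (rad n))].
Fixpoint Sq (n : nat) : set A :=
  match n with 0 => K | m.+1 => Sq m `&` ball (next (Sq m) m) (rad m) end.

Lemma rad_gt0 n : 0 < rad n.
Proof. by rewrite /rad invr_gt0 exprn_gt0. Qed.

Lemma Sq_bad n : ~ covered (Sq n) /\ Sq n `<=` K.
Proof.
elim: n => [|n [IH1 IH2]] /=; first by split.
split; last by move=> a [/IH2].
have := @xgetPex _ 0 [set b | ~ covered (Sq n `&` ball b (rad n))].
by apply; apply: bad_split => //; exact: rad_gt0.
Qed.

Lemma Sq_mono n m : (n <= m)%N -> Sq m `<=` Sq n.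
Proof.
move=> /subnK <-; elim: (m - n)%N => [|k IH] /=; first by rewrite add0n.
by move=> a [/IH].
Qed.

Let cen n := next (Sq n) n.
Let z n := xget 0 (Sq n.+1).

Lemma z_in n : Sq n.+1 (z n).
Proof.
apply: xgetPex; apply/not_existsP => H; apply: (Sq_bad n.+1).1.
exact: covered0.
Qed.

Lemma z_K n : L (z n) <= 1.
Proof. exact: (Sq_bad n.+1).2 (z_in n). Qed.

Lemma Sq_ball n y : Sq n.+1 y -> qn (y - cen n) < rad n.
Proof. by case. Qed.

Lemma z_close n m : (n <= m)%N -> qn (z m - z n) < rad n + rad n.
Proof.
move=> nm; have h1 := Sq_ball (Sq_mono (nm : (n.+1 <= m.+1)%N) (z_in m)).
have h2 := Sq_ball (z_in n).
apply: le_lt_trans (qnorm_tri Hou _ (cen n) _) _.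
by rewrite (qnormB Hou (cen n)); apply: ltrD.
Qed.

Fixpoint sh (n : nat) : R :=
  match n with 0 => 0 | m.+1 =>
    xget 0 [set t | on (z m.+1 + t *: e - (z m + sh m *: e)) < qn (z m.+1 - z m) + rad m] end.

Lemma sh_spec m : on (z m.+1 + sh m.+1 *: e - (z m + sh m *: e)) < qn (z m.+1 - z m) + rad m.
Proof.
have := @xgetPex _ 0 [set t | on (z m.+1 + t *: e - (z m + sh m *: e)) < qn (z m.+1 - z m) + rad m].
apply; have [t ht] := qnorm_adh Hou (z m.+1 - z m) (rad_gt0 m).
exists (t + sh m) => /=.
suff -> : z m.+1 + (t + sh m) *: e - (z m + sh m *: e) = z m.+1 - z m + t *: e by [].
by rewrite scalerDl opprD [z m.+1 + _]addrA addrACA subrr addr0 addrAC.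
Qed.

Let y n := z n + sh n *: e.

Lemma y_step m : on (y m.+1 - y m) <= 3%:R * rad m.
Proof.
apply/ltW; apply: lt_le_trans (sh_spec m) _.
have := z_close (leqnSn m) => h.
have -> : 3%:R * rad m = (rad m + rad m) + rad m by set u := rad m; lra.
by rewrite lerD2r ltW.
Qed.

Lemma rad_S n : rad n.+1 = rad n / 2.
Proof. by rewrite /rad exprSr invfM. Qed.

Lemma y_cauchy n j : on (y (n + j)%N - y n) <= 6%:R * rad n - 6%:R * rad (n + j)%N.
Proof.
elim: j => [|j IH]; first by rewrite addn0 subrr ou_norm0 // subrr.
rewrite addnS.
have -> : y (n + j).+1 - y n = (y (n + j).+1 - y (n + j)%N) + (y (n + j)%N - y n).
  by rewrite addrA subrK.
apply: le_trans (ou_normD Hou _ _) _.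
apply: le_trans (lerD (y_step _) IH) _.
rewrite rad_S; set u := rad (n + j)%N; lra.
Qed.

Lemma y_cauchy2 n m : (n <= m)%N -> on (y m - y n) <= 6%:R * rad n.
Proof.
move=> /subnK <-; rewrite addnC; apply: le_trans (y_cauchy _ _) _.
by rewrite gerDl oppr_le0 mulr_ge0 // ltW // rad_gt0.
Qed.

Lemma no_cover : False.
Proof.
have Hy : forall n, L (y n) <= 1 by move=> n; rewrite /y (L_shift Hlip) z_K.
have Hc : forall eps : R, 0 < eps -> exists N, forall m n, (N <= m)%N -> (N <= n)%N ->
    on (y m - y n) < eps.
  move=> eps eps0.
  have e12 : 0 < eps / 12%:R by rewrite divr_gt0.
  have [N HN] := exists_small e12.
  exists N => m n Nm Nn.
  have -> : y m - y n = (y m - y N) + - (y n - y N) by rewrite opprB addrA subrK.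
  apply: le_lt_trans (ou_normD Hou _ _) _; rewrite ou_normN //.
  apply: le_lt_trans (lerD (y_cauchy2 Nm) (y_cauchy2 Nn)) _.
  have := HN N (leqnn N); rewrite -/(rad N) => h.
  have : 12%:R * rad N < eps by rewrite mulrC -ltr_pdivlMr.
  lra.
have [a Ka Ha] := Hcl Hy Hc.
have [U CU Ua] := HCc Ka.
have [eps eps0 HU] := HCo CU Ua.
have eps2 : 0 < eps / 4%:R by rewrite divr_gt0.
have [N1 HN1] := Ha _ eps2.
have [k Hk] := exists_small eps2.
pose n := maxn N1 k.
have hn1 : on (y n - a) < eps / 4%:R by apply: HN1; rewrite leq_maxl.
have hk : rad n < eps / 4%:R by apply: Hk; rewrite leq_maxr.
apply: (Sq_bad n.+1).1; exists [:: U]; split; first by move=> V [<-|].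
move=> w Sw; exists U; split; first by left.
apply: HU.
have h1 := Sq_ball Sw.
have h2 : qn (z n - a) < eps / 4%:R.
  apply: le_lt_trans hn1; have := qnorm_le Hou (z n - a) (sh n).
  by rewrite /y addrAC.
have h3 := Sq_ball (z_in n).
apply: le_lt_trans (qnorm_tri Hou _ (cen n) _) _.
apply: le_lt_trans (lerD (lexx _) (qnorm_tri Hou _ (z n) _)) _.
rewrite (qnormB Hou (cen n)).
lra.
Qed.

End Cov.

Lemma K_compact : q_compact le e K.
Proof.
move=> C HCo HCc.
have [[l [h1 h2]]|nc] := pselect (covered C K); last first.
  by exfalso; apply: (no_cover HCo HCc nc).
exists (length l), (fun i => List.nth i l set0); split.
  by move=> i; apply: h1; apply: List.nth_In; apply/ssrnat.ltP.
move=> a /h2 [U [iU Ua]].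
have [i [il Hi]] := List.In_nth l U set0 iU.
by exists (Ordinal (introT ssrnat.ltP il)); rewrite /= Hi.
Qed.

End Compact.

Section Cont.
Context {R : realType} {A : lmodType R} (le : A -> A -> Prop) (e : A) (L : A -> R).
Hypothesis Hou : is_order_unit_space le e.
Hypothesis Hlip : lip_norm le e L.
Hypothesis Hcl : closed_seminorm le e L.
Notation on := (ou_norm le e).
Notation qn := (qnorm le e).

Definition contK (g : A -> R) := forall a, L a <= 1 -> forall eps : R, 0 < eps ->
  exists2 d : R, 0 < d & forall b, L b <= 1 -> qn (b - a) < d -> `|g b - g a| < eps.

Lemma qn0 : qn 0 = 0.
Proof. by rewrite -(scale0r e) qnorm_e. Qed.

Lemma compact_min g : contK g -> exists2 x0, L x0 <= 1 & forall x, L x <= 1 -> g x0 <= g x.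
Proof.
move=> Hg; apply: contrapT => H.
have H' : forall x0, L x0 <= 1 -> exists2 x, L x <= 1 & g x < g x0.
  move=> x0 Kx0; apply: contrapT => nx; apply: H; exists x0 => // x Kx.
  rewrite leNgt; apply/negP => lt; apply: nx; by exists x.
pose C := [set U : set A | exists x0 x d, [/\ L x <= 1, 0 < d,
   U = [set y | qn (y - x0) < d] &
   forall y, L y <= 1 -> qn (y - x0) < d -> g x < g y]].
have [||n [gg [Cg Covg]]] := K_compact Hou Hlip Hcl (C := C).
- by move=> U [x0 [x [d [_ _ -> _]]]]; apply: ball_open.
- move=> a Ka; have [x Kx gx] := H' a Ka.
  have eps0 : 0 < g a - g x by rewrite subr_gt0.
  have [d d0 Hd] := Hg a Ka _ eps0.
  exists [set y | qn (y - a) < d]; last by rewrite /= subrr qn0.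
  exists a, x, d; split => // y Ky hy.
  have := Hd y Ky hy; rewrite ltr_norml => /andP [h _]; lra.
have Cg' : forall i, exists x, exists x0 d, [/\ L x <= 1, 0 < d,
   gg i = [set y | qn (y - x0) < d] &
   forall y, L y <= 1 -> qn (y - x0) < d -> g x < g y].
  by move=> i; have [x0 [x [d h]]] := Cg i; exists x, x0, d.
have [xs Hxs] := choice Cg'.
have K0 : L 0 <= 1 by rewrite (L0 Hlip).
have [i0 _] := Covg 0 K0.
have [j _ Hj] := @arg_minP _ _ _ i0 predT (fun i => g (xs i)) isT.
have [x0 [d [Kj _ _ _]]] := Hxs j.
have [i gi] := Covg _ Kj.
have [x1 [d1 [_ _ hgi Hi]]] := Hxs i.
move: gi; rewrite hgi /= => gi.
have := Hi _ Kj gi; rewrite ltNge Hj //.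
Qed.

Lemma Af0_cont f : Af0 le e L f -> contK f.
Proof. by case. Qed.

Lemma contK_abs f : contK f -> contK (fun x => - `|f x|).
Proof.
move=> Hf a Ka eps eps0; have [d d0 Hd] := Hf a Ka eps eps0.
exists d => // b Kb hb; apply: le_lt_trans (Hd b Kb hb).
by rewrite opprK addrC distrC ler_dist_dist.
Qed.

Lemma contK_bounded f : contK f -> exists B, forall x, L x <= 1 -> `|f x| <= B.
Proof.
move=> /contK_abs /compact_min [x0 K0 H]; exists `|f x0| => x Kx.
by have := H x Kx; rewrite lerN2.
Qed.

Lemma supnorm_has f : contK f -> has_sup [set `|f a| | a in unit_ball L].
Proof.
move=> /contK_bounded [B HB]; split.
  by exists `|f 0|, 0 => //; rewrite /unit_ball /= (L0 Hlip).
by exists B => _ [a Ka <-]; apply: HB.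
Qed.

Lemma supnorm_ge f x : contK f -> L x <= 1 -> `|f x| <= supnorm L f.
Proof. by move=> /supnorm_has h Kx; apply: sup_upper_bound => //; exists x. Qed.

Lemma supnorm_le f B : (forall x, L x <= 1 -> `|f x| <= B) -> supnorm L f <= B.
Proof.
move=> HB; apply: ge_sup.
  by exists `|f 0|, 0 => //; rewrite /unit_ball /= (L0 Hlip).
by move=> _ [a Ka <-]; apply: HB.
Qed.

Lemma supnorm_ge0 f : contK f -> 0 <= supnorm L f.
Proof. by move=> Hf; apply: le_trans (supnorm_ge Hf (_ : L 0 <= 1)); rewrite ?(L0 Hlip). Qed.

Lemma contK_add f g : contK f -> contK g -> contK (fun x => f x + g x).
Proof.
move=> Hf Hg a Ka eps eps0.
have eps2 : 0 < eps / 2 by rewrite divr_gt0.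
have [d1 d10 H1] := Hf a Ka _ eps2; have [d2 d20 H2] := Hg a Ka _ eps2.
exists (Num.min d1 d2); first by rewrite lt_min d10 d20.
move=> b Kb; rewrite lt_min => /andP [h1 h2].
have := H1 b Kb h1; have := H2 b Kb h2.
have -> : f b + g b - (f a + g a) = (f b - f a) + (g b - g a) by rewrite opprD addrACA.
move=> u v; apply: le_lt_trans (ler_normD _ _) _; lra.
Qed.

Lemma contK_const c : contK (fun _ => c).
Proof. by move=> a Ka eps eps0; exists 1 => // b _ _; rewrite subrr normr0. Qed.

Lemma contK_scale c f : contK f -> contK (fun x => c * f x).
Proof.
move=> Hf a Ka eps eps0.
have c1 : 0 < `|c| + 1 by rewrite ltr_wpDl.
have [d d0 Hd] := Hf a Ka (eps / (`|c| + 1)) (divr_gt0 eps0 c1).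
exists d => // b Kb hb; rewrite -mulrBr normrM.
have := Hd b Kb hb; rewrite ltr_pdivlMr // => h.
apply: le_lt_trans h; rewrite [X in X <= _]mulrC; apply: ler_wpM2l; [exact: normr_ge0 | lra].
Qed.

Lemma contK_sq f : contK f -> contK (fun x => f x ^+ 2).
Proof.
move=> Hf a Ka eps eps0.
set w := `|f a|.
have w1 : 0 < 1 + 2%:R * w by have := normr_ge0 (f a); rewrite -/w; lra.
have m0 : 0 < Num.min 1 (eps / (1 + 2%:R * w)) by rewrite lt_min ltr01 divr_gt0.
have [d d0 Hd] := Hf a Ka _ m0.
exists d => // b Kb hb; have := Hd b Kb hb; rewrite lt_min => /andP [h1 h2].
have -> : f b ^+ 2 - f a ^+ 2 = (f b - f a) * (f b - f a + 2%:R * f a).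
  by rewrite !expr2; ring.
rewrite normrM.
have h3 : `|f b - f a + 2%:R * f a| <= 1 + 2%:R * w.
  apply: le_trans (ler_normD _ _) _; rewrite normrM normr_nat.
  by rewrite lerD2r ltW.
apply: le_lt_trans (ler_wpM2l (normr_ge0 _) h3) _.
by rewrite -ltr_pdivlMr.
Qed.

Lemma contK_ext f g : (forall x, f x = g x) -> contK f -> contK g.
Proof. by move=> fg Hf a Ka eps eps0; have [d d0 H] := Hf a Ka eps eps0; exists d => // b; rewrite -!fg; apply: H. Qed.

Lemma contK_sum (I : Type) (s : seq I) (F : I -> A -> R) :
  (forall i, contK (F i)) -> contK (fun x => \sum_(i <- s) F i x).
Proof.
move=> HF; elim: s => [|i s IH].
  by apply: contK_ext (contK_const 0) => x; rewrite big_nil.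
by apply: contK_ext (contK_add (HF i) IH) => x; rewrite big_cons.
Qed.

End Cont.

Section Main.
Context {R : realType} {A : lmodType R} (le : A -> A -> Prop) (e : A) (L : A -> R).
Hypothesis Hou : is_order_unit_space le e.
Hypothesis Hlip : lip_norm le e L.
Hypothesis Hcl : closed_seminorm le e L.
Notation on := (ou_norm le e).
Notation qn := (qnorm le e).

Lemma Af0_zero : Af0 le e L (fun _ => 0).
Proof.
split => //.
  by move=> a _ eps eps0; exists 1 => // b _ _; rewrite subrr normr0.
by move=> *; rewrite !mulr0 addr0.
Qed.

Lemma K_convex : q_convex (unit_ball L).
Proof.
move=> a b t Ka Kb /andP [t0 t1]; rewrite /unit_ball /=.
apply: le_trans (L_add Hlip _ _) _.
rewrite !(L_Z Hlip) ger0_norm // ger0_norm ?subr_ge0 //.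
move: Ka Kb; rewrite /unit_ball /= => Ka Kb.
have h1 : t * L a <= t by rewrite ler_piMr.
have h2 : (1 - t) * L b <= 1 - t by rewrite ler_piMr // subr_ge0.
lra.
Qed.

Lemma sigma_dual a : is_dual_elem le e L (sigma L a).
Proof.
have r0 : 0 < L a + 1 by rewrite ltr_wpDl // (L_ge0 Hlip).
have Kz : L ((L a + 1)^-1 *: a) <= 1 by apply: (Kscale Hlip) => //; rewrite lerDl.
split.
- by move=> f g _ _ fg; rewrite /sigma /ext fg.
- by move=> f g c _ _; rewrite /sigma /ext mulrDr mulrCA.
- exists (L a + 1) => f Hf; rewrite /sigma.
  apply: (ext_bound Hlip Hf r0); first by rewrite lerDl.
  by move=> x Kx; apply: (supnorm_ge Hou Hlip Hcl) => //; apply: Af0_cont.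
Qed.

Definition pM (M : R) (x : A) := inf [set L y + M * qn (x - y) | y in [set: A]].

Section PM.
Variable M : R.
Hypothesis M0 : 0 < M.

Lemma pM_lb x : lbound [set L y + M * qn (x - y) | y in [set: A]] 0.
Proof.
move=> _ [y _ <-]; apply: addr_ge0; first exact: (L_ge0 Hlip).
by apply: mulr_ge0; [exact: ltW | exact: qnorm_ge0].
Qed.

Lemma pM_has x : has_inf [set L y + M * qn (x - y) | y in [set: A]].
Proof. by split; [exists (L 0 + M * qn (x - 0)), 0 | exists 0; exact: pM_lb]. Qed.

Lemma pM_le x y : pM M x <= L y + M * qn (x - y).
Proof. by apply: ge_inf; [exists 0; exact: pM_lb | exists y]. Qed.

Lemma pM_adh x eps : 0 < eps -> exists y, L y + M * qn (x - y) < pM M x + eps.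
Proof.
move=> eps0; have [_ [y _ <-] h] := inf_adherent eps0 (pM_has x).
by exists y.
Qed.

Lemma pM_ge0 x : 0 <= pM M x.
Proof. by apply: lb_le_inf; [exists (L 0 + M * qn (x - 0)), 0 | exact: pM_lb]. Qed.

Lemma pM_leL x : pM M x <= L x.
Proof. by have := pM_le x x; rewrite subrr (qn0 Hou) mulr0 addr0. Qed.

Lemma pM_leq x : pM M x <= M * qn x.
Proof. by have := pM_le x 0; rewrite (L0 Hlip) add0r subr0. Qed.

Lemma pM_add x x' : pM M (x + x') <= pM M x + pM M x'.
Proof.
apply/ler_addgt0Pr => eps eps0.
have eps2 : 0 < eps / 2 by rewrite divr_gt0.
have [y hy] := pM_adh x eps2; have [y' hy'] := pM_adh x' eps2.
apply: le_trans (pM_le _ (y + y')) _.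
have h1 := L_add Hlip y y'.
have h2 : qn (x + x' - (y + y')) <= qn (x - y) + qn (x' - y').
  by rewrite opprD addrACA; apply: qnormD.
have h3 : M * qn (x + x' - (y + y')) <= M * (qn (x - y) + qn (x' - y')).
  by rewrite ler_pM2l.
lra.
Qed.

Lemma pM_scale (c : R) x : pM M (c *: x) <= `|c| * pM M x.
Proof.
apply/ler_addgt0Pr => eps eps0.
have c1 : 0 < `|c| + 1 by rewrite ltr_wpDl.
have [y hy] := pM_adh x (divr_gt0 eps0 c1).
apply: le_trans (pM_le _ (c *: y)) _.
rewrite (L_Z Hlip) -scalerBr.
have h2 : M * qn (c *: (x - y)) <= `|c| * (M * qn (x - y)).
  by rewrite mulrCA ler_pM2l // qnormZ.
apply: le_trans (_ : `|c| * (L y + M * qn (x - y)) <= _).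
  by rewrite mulrDr lerD2l.
apply: le_trans (_ : `|c| * (pM M x + eps / (`|c| + 1)) <= _).
  by rewrite ler_wpM2l // ltW.
rewrite mulrDr lerD2l mulrA ler_pdivrMr // [X in X <= _]mulrC mulrDr mulr1 lerDl ltW //.
Qed.
End PM.

Lemma dual_ub a f : Af0 le e L f -> supnorm L f <= 1 -> `|sigma L a f| <= L a.
Proof.
move=> Hf s1; apply/ler_addgt0Pr => d d0; rewrite /sigma.
have La0 := L_ge0 Hlip a.
have r0 : 0 < L a + d by lra.
have HB : forall x, L x <= 1 -> `|f x| <= supnorm L f.
  by move=> x Kx; apply: (supnorm_ge Hou Hlip Hcl) => //; apply: Af0_cont.
have Lr : L a <= L a + d by lra.
have h := ext_bound Hlip Hf r0 Lr HB.
apply: le_trans h _.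
by rewrite ler_piMr // ltW.
Qed.

Lemma dual_set_ne a : [set `|sigma L a f| | f in
    [set f | Af0 le e L f /\ supnorm L f <= 1]] !=set0.
Proof.
exists `|sigma L a (fun _ => 0)|, (fun _ => 0) => //; split; first exact: Af0_zero.
by apply: (supnorm_le Hlip) => x _; rewrite normr0.
Qed.

Lemma dual_norm_le a : dual_norm le e L (sigma L a) <= L a.
Proof.
apply: ge_sup; first exact: dual_set_ne.
by move=> _ [f [Hf s1] <-]; apply: dual_ub.
Qed.

Lemma dual_norm_ge a : L a <= dual_norm le e L (sigma L a).
Proof.
apply/ler_addgt0Pr => eta eta0.
suff [f [Hf s1] hf] : exists2 f, Af0 le e L f /\ supnorm L f <= 1 & L a - eta <= `|sigma L a f|.
  have : `|sigma L a f| <= dual_norm le e L (sigma L a).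
    apply: sup_upper_bound; last by exists f.
    split; first exact: dual_set_ne.
    by exists (L a) => _ [g [Hg sg] <-]; apply: dual_ub.
  lra.
have La0 := L_ge0 Hlip a.
have [hl|hl] := leP (L a - eta) 0.
  exists (fun _ => 0); last by apply: le_trans hl _.
  split; first exact: Af0_zero.
  by apply: (supnorm_le Hlip) => x _; rewrite normr0.
set l := L a - eta in hl *.
have [M [M0 hM]] : exists M, 0 < M /\ l <= pM M a.
  apply: contrapT => H.
  have H' : forall M, 0 < M -> pM M a < l.
    by move=> M M0; rewrite ltNge; apply/negP => h; apply: H; exists M.
  have : L (l^-1 *: a) <= 1.
    apply: (lsc_q Hou Hlip) => eps eps0.
    pose M := 2 / eps.
    have M0 : 0 < M by rewrite divr_gt0.
    have [_ [y _ <-] hy] := inf_lt (pM_has M0 a).1 (H' M M0).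
    have q0 := qnorm_ge0 Hou (a - y).
    have hMq : 0 <= M * qn (a - y) by rewrite mulr_ge0 // ltW.
    exists (l^-1 *: y); split.
      by apply: (Kscale Hlip) => //; lra.
    rewrite -scalerBr; apply: le_lt_trans (qnormZ Hou _ _) _.
    rewrite ger0_norm ?invr_ge0 ?ltW // mulrC ltr_pdivrMr //.
    have hMe : M * eps = 2 by rewrite /M; field; rewrite gt_eqF.
    have Ly0 := L_ge0 Hlip y.
    have : M * qn (a - y) < l by lra.
    move=> h; nra.
  rewrite (L_Z Hlip) ger0_norm; last by rewrite invr_ge0 ltW.
  rewrite mulrC ler_pdivrMr // mul1r => h.
  move: h; rewrite /l; lra.
have [f [flin fle fa]] := hahn_banach (pM_add M0) (pM_scale M0) a.
have f0 : f 0 = 0 by have := flin 1 0 0; rewrite scale1r addr0 mul1r; lra.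
have fZ : forall c x, f (c *: x) = c * f x.
  by move=> c x; have := flin c x 0; rewrite addr0 f0 addr0.
have fD : forall x y, f (x + y) = f x + f y.
  by move=> x y; have := flin 1 x y; rewrite scale1r mul1r.
have fabs : forall x, `|f x| <= pM M x.
  move=> x; rewrite ler_norml fle andbT.
  have := fle (- x); rewrite -scaleN1r fZ.
  have := pM_scale M0 (-1) x; rewrite normrN normr1 mul1r; lra.
exists f; last first.
  rewrite /sigma /ext fZ mulrA mulfV ?mul1r; last by rewrite gt_eqF // ltr_wpDl.
  by apply: le_trans (ler_norm _); rewrite fa.
split.
  split => //.
    move=> x _ eps eps0; exists (eps / M); first by rewrite divr_gt0.
    move=> b _ hb; have := fZ (-1) x; rewrite scaleN1r mulN1r => hN.
    have -> : f b - f x = f (b - x) by rewrite fD hN.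
    apply: le_lt_trans (fabs _) _; apply: le_lt_trans (pM_leq M0 _) _.
    by rewrite mulrC -ltr_pdivlMr.
  by move=> x y t _ _ _; rewrite fD !fZ.
apply: (supnorm_le Hlip) => x Kx; apply: le_trans (fabs x) _.
by apply: le_trans Kx; apply: pM_leL.
Qed.


Lemma Af0_lin f g c : Af0 le e L f -> Af0 le e L g -> Af0 le e L (fun x => c * f x + g x).
Proof.
move=> Hf Hg; split.
- by rewrite (f0 Hf) (f0 Hg) mulr0 addr0.
- exact: contK_add (contK_scale c (Af0_cont Hf)) (Af0_cont Hg).
- move=> a b t Ka Kb t01; rewrite (f_aff Hf) // (f_aff Hg) //; ring.
Qed.

Lemma Af0_ext f g : (forall x, f x = g x) -> Af0 le e L f -> Af0 le e L g.
Proof. by move=> fg; have -> : f = g by apply: funext. Qed.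

Lemma Af0_sum (I : Type) (s : seq I) (F : I -> A -> R) (lam : I -> R) :
  (forall i, Af0 le e L (F i)) -> Af0 le e L (fun x => \sum_(i <- s) lam i * F i x).
Proof.
move=> HF; elim: s => [|i s IH].
  by apply: Af0_ext Af0_zero => x; rewrite big_nil.
by apply: Af0_ext (Af0_lin (lam i) (HF i) IH) => x; rewrite big_cons.
Qed.

Section Surj.
Variable phi : (A -> R) -> R.
Hypothesis Hphi : is_dual_elem le e L phi.

Lemma phi_resp f g : Af0 le e L f -> Af0 le e L g -> (forall a, L a <= 1 -> f a = g a) ->
  phi f = phi g.
Proof. by case: Hphi => H _ _; apply: H. Qed.

Lemma phi_lin f g (c : R) : Af0 le e L f -> Af0 le e L g ->
  phi (fun a => c * f a + g a) = c * phi f + phi g.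
Proof. by case: Hphi => _ H _; apply: H. Qed.

Lemma phi0 : phi (fun _ => 0) = 0.
Proof.
have := phi_lin 1 Af0_zero Af0_zero.
rewrite (@phi_resp (fun _ => 1 * 0 + 0) (fun _ => 0)) //.
- by rewrite mul1r; lra.
- exact: Af0_lin Af0_zero Af0_zero.
- exact: Af0_zero.
- by move=> *; rewrite mulr0 addr0.
Qed.

Lemma phi_sum (I : Type) (s : seq I) (F : I -> A -> R) (lam : I -> R) :
  (forall i, Af0 le e L (F i)) ->
  phi (fun x => \sum_(i <- s) lam i * F i x) = \sum_(i <- s) lam i * phi (F i).
Proof.
move=> HF; elim: s => [|i s IH].
  rewrite big_nil; transitivity (phi (fun _ => 0)); last exact: phi0.
  apply: phi_resp; first 2 last.
  - by move=> * /=; rewrite big_nil.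
  - by apply: Af0_sum.
  - exact: Af0_zero.
rewrite big_cons -IH -phi_lin //; last exact: Af0_sum.
apply: phi_resp.
- exact: Af0_sum.
- exact: Af0_lin (Af0_sum _ _ HF).
- by move=> * /=; rewrite big_cons.
Qed.

Lemma surj_main : exists a, forall f, Af0 le e L f -> phi f = sigma L a f.
Proof.
case: (Hphi) => _ _ [C HC].
pose c := Num.max C 1.
have c0 : 0 < c by rewrite lt_max ltr01 orbT.
have Hc : forall f, Af0 le e L f -> `|phi f| <= c * supnorm L f.
  move=> f Hf; apply: le_trans (HC f Hf) _; apply: ler_wpM2r.
    exact: (supnorm_ge0 Hou Hlip Hcl (Af0_cont Hf)).
  by rewrite le_max lexx.
pose psi f := phi f / c.
suff [x Kx Hx] : exists2 x, L x <= 1 & forall f, Af0 le e L f -> psi f = f x.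
  exists (c *: x) => f Hf; rewrite /sigma (extZ Hlip Hf) (ext_K Hlip Hf Kx) -Hx //.
  by rewrite /psi mulrC divfK // gt_eqF.
apply: contrapT => H.
have H' : forall x, L x <= 1 -> exists f, Af0 le e L f /\ psi f != f x.
  move=> x Kx; apply: contrapT => nx; apply: H; exists x => // f Hf.
  apply/eqP; apply: contrapT => ne; apply: nx; exists f; split => //; exact/negP.
pose C0 := [set U : set A | exists f x d, [/\ Af0 le e L f, 0 < d,
   U = [set y | qn (y - x) < d] &
   forall y, L y <= 1 -> qn (y - x) < d -> f y != psi f]].
have [||n [gg [Cg Covg]]] := K_compact Hou Hlip Hcl (C := C0).
- by move=> U [f [x [d [_ _ -> _]]]]; apply: (ball_open Hou).
- move=> a Ka; have [f [Hf nf]] := H' a Ka.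
  have eps0 : 0 < `|f a - psi f| by rewrite normr_gt0 subr_eq0 eq_sym.
  have [d d0 Hd] := f_cont Hf Ka eps0.
  exists [set y | qn (y - a) < d]; last by rewrite /= subrr (qn0 Hou).
  exists f, a, d; split => // y Ky hy; apply/eqP => fy.
  by have := Hd y Ky hy; rewrite fy distrC ltxx.
have Cg' : forall i, exists f, Af0 le e L f /\ exists x d, gg i = [set y | qn (y - x) < d] /\
    forall y, L y <= 1 -> qn (y - x) < d -> f y != psi f.
  by move=> i; have [f [x [d [Hf _ E Hy]]]] := Cg i; exists f; split => //; exists x, d.
have [fs Hfs] := choice Cg'.
have Afs : forall i, Af0 le e L (fs i) by move=> i; case: (Hfs i).
pose s := index_enum 'I_n.
pose G x := \sum_(i <- s) (fs i x - psi (fs i)) ^+ 2.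
have contG : contK le e L G.
  apply: contK_sum => i; apply: contK_sq.
  exact: contK_add (Af0_cont (Afs i)) (contK_const le e (L:=L) (- psi (fs i))).
have [x0 Kx0 Hmin] := compact_min Hou Hlip Hcl contG.
have Gpos : 0 < G x0.
  have [i gi] := Covg x0 Kx0.
  have [_ [x [d [E Hy]]]] := Hfs i; rewrite E in gi; have ne := Hy _ Kx0 gi.
  rewrite /G (bigD1_seq i) ?mem_index_enum ?index_enum_uniq //=.
  have t0 : 0 < (fs i x0 - psi (fs i)) ^+ 2 by rewrite exprn_even_gt0 //= subr_eq0.
  have r0 : 0 <= \sum_(j <- s | j != i) (fs j x0 - psi (fs j)) ^+ 2.
    by apply: sumr_ge0 => j _; exact: sqr_ge0.
  lra.
pose lam i := psi (fs i) - fs i x0.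
pose h y := \sum_(i <- s) lam i * fs i y.
have Ah : Af0 le e L h by apply: Af0_sum.
have psih : psi h = \sum_(i <- s) lam i * psi (fs i).
  rewrite /psi /h phi_sum // mulr_suml; apply: eq_bigr => i _; by rewrite mulrA.
have gap : psi h - h x0 = G x0.
  rewrite psih /h /G -sumrB; apply: eq_bigr => i _; rewrite /lam; ring.
have key : forall y, L y <= 1 -> h y <= h x0.
  move=> y Ky; rewrite leNgt; apply/negP => hlt.
  set D := h y - h x0.
  have D0 : 0 < D by rewrite subr_gt0.
  set S := \sum_(i <- s) (fs i y - fs i x0) ^+ 2.
  have S0 : 0 <= S by apply: sumr_ge0 => i _; exact: sqr_ge0.
  have S1 : 0 < S + 1 by lra.
  pose t := Num.min 1 (D / (S + 1)).
  have t0 : 0 < t by rewrite lt_min ltr01 divr_gt0.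
  have t1 : t <= 1 by rewrite ge_min lexx.
  have tD : t * (S + 1) <= D.
    by rewrite -ler_pdivlMr // ge_min lexx orbT.
  have t01 : 0 <= t <= 1 by rewrite (ltW t0) t1.
  pose z := t *: y + (1 - t) *: x0.
  have Kz : L z <= 1 by apply: K_convex.
  have Gz := Hmin z Kz.
  have hD : \sum_(i <- s) lam i * (fs i y - fs i x0) = D.
    by rewrite /D /h -sumrB; apply: eq_bigr => i _; rewrite mulrBr.
  have expand : G z - G x0 = t ^+ 2 * S - 2 * t * D.
    rewrite /G -sumrB.
    transitivity (\sum_(i <- s) (t ^+ 2 * (fs i y - fs i x0) ^+ 2
                                 - (2 * t) * (lam i * (fs i y - fs i x0)))).
      apply: eq_bigr => i _; rewrite /z (f_aff (Afs i)) // /lam; ring.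
    by rewrite sumrB -!mulr_sumr hD.
  have h1 : 0 <= t * (t * S - 2 * D).
    have : 0 <= G z - G x0 by rewrite subr_ge0.
    by rewrite expand; congr (_ <= _); ring.
  have h2 : 0 <= t * S - 2 * D by move: h1; rewrite pmulr_rge0.
  move: tD; rewrite mulrDr mulr1 => tD.
  lra.
have habs : forall y, L y <= 1 -> `|h y| <= h x0.
  move=> y Ky; rewrite ler_norml key // andbT.
  have Ky' : L (- y) <= 1 by rewrite (L_N Hlip).
  have := key _ Ky'; rewrite (f_odd Hlip Ah Ky); lra.
have sup_h : supnorm L h <= h x0 by apply: (supnorm_le Hlip).
have e1 : phi h = c * psi h by rewrite /psi mulrC divfK // gt_eqF.
have e2 : c * supnorm L h < c * psi h by rewrite ltr_pM2l //; lra.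
have := Hc h Ah; have := ler_norm (phi h); lra.
Qed.

End Surj.

End Main.

Unset Implicit Arguments.

Theorem theorem5p2 (R : realType) (A : lmodType R) (le : A -> A -> Prop) (e : A)
    (L : A -> R) :
  is_order_unit_space le e -> lip_norm le e L -> closed_seminorm le e L ->
  [/\ q_compact le e (unit_ball L),
      q_convex (unit_ball L) &
  [/\       (* sigma(a~) is an element of the dual of Af_0(K) *)
      (forall a, is_dual_elem le e L (sigma L a)),
      (* sigma is well defined on A/Re *)
      (forall a (t : R) f, Af0 le e L f -> sigma L (a + t *: e) f = sigma L a f),
      (* sigma is linear *)
      (forall (c : R) a b f, Af0 le e L f ->
          sigma L (c *: a + b) f = c * sigma L a f + sigma L b f),
      (* sigma is isometric from (A/Re, L~) *)
      (forall a, dual_norm le e L (sigma L a) = L a) &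
      (* sigma is onto the dual *)
      (forall phi, is_dual_elem le e L phi ->
          exists a, forall f, Af0 le e L f -> phi f = sigma L a f)]].
Proof.
move=> Hou Hlip Hcl; split.
- exact: K_compact.
- exact: (K_convex Hlip).
- split.
  + by move=> a; apply: sigma_dual.
  + by move=> a t f Hf; rewrite /sigma (ext_shift Hou Hlip Hf).
  + by move=> c a b f Hf; rewrite /sigma (extD Hlip Hf) (extZ Hlip Hf).
  + move=> a; apply/eqP; rewrite eq_le.
    by rewrite (dual_norm_le Hou Hlip Hcl) (dual_norm_ge Hou Hlip Hcl).
  + by move=> phi Hphi; apply: (surj_main Hou Hlip Hcl Hphi).
Qed.
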